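(* Let $n\geq 1$ and let $\pi\in S_n$ be a 321-avoiding permutation. Let $A_\pi$ be the linear Nakayama algebra (with $n+1$ simple modules) associated to $\pi$. Then the number of indecomposable projective $A_\pi$-modules (up to isomorphism) of injective dimension exactly one equals the number of fixed points of $\pi$.
   Context: $K$ is a field. A linear Nakayama algebra with $m$ simple modules is a (connected) algebra $A=KQ/I$ with $Q$ the linearly oriented quiver $0\to 1\to\cdots\to m-1$ and $I$ an admissible ideal; modules are finite-dimensional right modules, $e_i$ are the primitive idempotents, $S_i$ the simple modules. The indecomposable projective $e_iA$ is uniserial with composition factors $S_i,S_{i+1},\dots,S_{i+c_i-1}$ (top to socle), where $c_i=\dim_K e_iA$; $A$ is determined up to isomorphism by its Kupisch series $[c_0,\dots,c_{m-1}]$, and every indecomposable module is isomorphic to $e_iA/e_iJ^k$ for some $i$ and $1\le k\le c_i$ ($J$ the Jacobson radical). To such $A$ with $m=n+1$ simple modules one associates the Dyck path $\mathcal D_A$ of semilength $n$ (the top boundary of its Auslander–Reiten quiver): the lattice path from $(0,0)$ to $(2n,0)$ whose vertex with first coordinate $x$ has height $h(x)=\max\{k-1 : 0\le i\le n,\ 1\le k\le c_i,\ 2i+k-1=2n-x\}$. This gives a bijection between isomorphism classes of linear Nakayama algebras with $n+1$ simple modules and Dyck paths of semilength $n$ (paths with steps $u=(1,1)$, $d=(1,-1)$ from $(0,0)$ to $(2n,0)$ never going below $y=0$). Billey–Jockusch–Stanley bijection: write a Dyck path of semilength $n$ as $u^{a_1}d^{d_1}u^{a_2}d^{d_2}\cdots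 u^{a_\ell}d^{d_\ell}$ with all $a_i,d_i\ge 1$; set $A_j=a_1+\dots+a_j$ and $D_j=d_1+\dots+d_j$ for $1\le j\le \ell-1$. Define $\pi(D_j)=A_j+1$ for $1\le j\le\ell-1$, and fill the remaining positions $[n]\setminus\{D_1,\dots,D_{\ell-1}\}$ in increasing order with the remaining values $[n]\setminus\{A_1+1,\dots,A_{\ell-1}+1\}$. This is a bijection from Dyck paths of semilength $n$ to 321-avoiding permutations of $[n]$ (permutations with no $i<j<k$ and $\pi(k)<\pi(j)<\pi(i)$). $A_\pi$ denotes the linear Nakayama algebra whose Dyck path $\mathcal D_{A_\pi}$ is mapped to $\pi$ by this bijection. *)

(* Defs.v *)
From mathcomp Require Import all_boot all_order all_fingroup.
Set Implicit Arguments. Unset Strict Implicit. Unset Printing Implicit Defensive.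

(* A Kupisch series is c = [c_0; ...; c_(m-1)] (c_i = dim e_i A).      *)
(* Connected linear Nakayama algebra KQ/I, Q = 0 -> 1 -> ... -> m-1,   *)
(* I admissible:  c_(m-1) = 1, c_i >= 2 for i < m-1,                   *)
Definition kupisch_series (m : nat) (c : seq nat) : bool :=
  [&& size c == m, 0 < m, nth 0 c m.-1 == 1,
      all (fun i => 2 <= nth 0 c i) (iota 0 m.-1)
    & all (fun i => nth 0 c i <= (nth 0 c i.+1).+1) (iota 0 m.-1)].

(* Indecomposable modules: the pair (i,k) with 1 <= k <= c_i stands for
   e_i A / e_i J^k, uniserial with composition factors S_i,...,S_(i+k-1)
   (top to socle).  The indecomposable projective P_i = e_i A is (i, c_i). *)

(* Top index of the injective envelope I(S_s) of the simple S_s: the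
   indecomposable injective with socle S_s is the longest uniserial module
   with socle S_s, i.e. (j, s-j+1) with j minimal such that c_j >= s-j+1. *)
Definition inj_top (c : seq nat) (s : nat) : nat :=
  find (fun j => s - j < nth 0 c j) (iota 0 s.+1).

(* Injective dimension of the uniserial module (i,k), computed along its
   minimal injective coresolution: the injective envelope of (i,k) is
   I(S_(i+k-1)) = (j, i+k-j); the cokernel (first cosyzygy) is (j, i-j),
   zero iff j = i (i.e. (i,k) is injective).  Tops strictly decrease, so
   fuel i.+1 suffices. *)
Fixpoint injdim_aux (c : seq nat) (fuel i k : nat) : nat :=
  match fuel with
  | 0 => 0
  | f.+1 =>
      let j := inj_top c (i + k).-1 in
      if j == i then 0 else (injdim_aux c f j (i - j)).+1
  end.

Definition injdim (c : seq nat) (i k : nat) : nat := injdim_aux c i.+1 i k.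

Definition injdim_proj (c : seq nat) (i : nat) : nat := injdim c i (nth 0 c i).

(* Dyck path D_A of A with n+1 simples (semilength n).                *)
Definition dyck_height (n : nat) (c : seq nat) (x : nat) : nat :=
  \max_(i < n.+1 | (2 * i <= 2 * n - x) && ((2 * n - x).+1 - 2 * i <= nth 0 c i))
     (2 * n - x - 2 * i).

(* Step sequence of D_A: true = u = (1,1), false = d = (1,-1);
   step x goes from vertex x to vertex x+1. *)
Definition dyck_steps (n : nat) (c : seq nat) : seq bool :=
  [seq dyck_height n c x < dyck_height n c x.+1 | x <- iota 0 (2 * n)].

(* Billey–Jockusch–Stanley bijection.  Writing the path as            *)
(* u^a1 d^d1 ... u^al d^dl, the pairs (D_j, A_j) for 1<=j<=l-1 are     *)
(* exactly read off at the valleys (a d-step immediately followed by a *)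
(* u-step): D_j = #d-steps and A_j = #u-steps up to the valley.        *)
Definition valleys (s : seq bool) : seq nat :=
  [seq x <- iota 0 (size s).-1 | ~~ nth false s x && nth false s x.+1].

Definition bjs_Dpos (s : seq bool) : seq nat :=
  [seq count negb (take x.+1 s) | x <- valleys s].
Definition bjs_Avals (s : seq bool) : seq nat :=
  [seq (count id (take x.+1 s)).+1 | x <- valleys s].

(* pi(D_j) = A_j + 1; remaining positions of [1..n] filled in increasing
   order with the remaining values.  Positions/values are 1-based. *)
Definition bjs (n : nat) (s : seq bool) (p : nat) : nat :=
  let Dp := bjs_Dpos s in
  let Av := bjs_Avals s in
  let restpos := [seq q <- iota 1 n | q \notin Dp] in
  let restval := [seq v <- iota 1 n | v \notin Av] in
  if p \in Dp then nth 0 Av (index p Dp)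
  else nth 0 restval (index p restpos).

Definition avoids321 (n : nat) (pi : 'S_n) : bool :=
  [forall i : 'I_n, forall j : 'I_n, forall k : 'I_n,
     ~~ [&& i < j, j < k, pi k < pi j & pi j < pi i]].

(* c is the Kupisch series of A_pi: the BJS image of D_A is pi
   (pi : 'S_n is read 1-based via i |-> (pi i).+1). *)
Definition is_A_pi (n : nat) (pi : 'S_n) (c : seq nat) : Prop :=
  kupisch_series n.+1 c /\
  forall i : 'I_n, bjs n (dyck_steps n c) i.+1 = (pi i).+1.

(* Main.v *)
Require Import Defs.
From mathcomp Require Import all_boot all_order all_fingroup.
From mathcomp Require Import zify.
Set Implicit Arguments. Unset Strict Implicit. Unset Printing Implicit Defensive.

Definition bjsL (n : nat) (Dp Av : seq nat) (p : nat) : nat :=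
  let restpos := [seq q <- iota 1 n | q \notin Dp] in
  let restval := [seq v <- iota 1 n | v \notin Av] in
  if p \in Dp then nth 0 Av (index p Dp)
  else nth 0 restval (index p restpos).

Lemma bjsE n s p : bjs n s p = bjsL n (bjs_Dpos s) (bjs_Avals s) p.
Proof. by []. Qed.

Lemma index_filter_iota (P : pred nat) a m q :
  a <= q < a + m -> P q ->
  index q [seq y <- iota a m | P y] = count (fun y => P y && (y < q)) (iota a m).
Proof.
elim: m a => [|m IH] a Hq Pq; first by lia.
rewrite /= .
case: (ltngtP a q) => Haq.
- have aq : (a == q) = false by apply/eqP; lia.
  case: (P a) => /=; rewrite ?aq ?Haq /= IH //; lia.
- by lia.
- subst a; rewrite Pq /= eqxx /=.
  rewrite (eq_in_count (a2 := pred0)) ?count_pred0 // => y.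
  rewrite mem_iota => Hy; apply/negbTE; rewrite negb_and; apply/orP; right; rewrite -leqNgt; lia.
Qed.

Lemma nth_eq_index (l : seq nat) k q : 0 < q -> uniq l ->
  (nth 0 l k == q) = (q \in l) && (index q l == k).
Proof.
move=> q0 ul.
case: (boolP (q \in l)) => ql /=.
- apply/eqP/eqP => [E|<-]; last by rewrite nth_index.
  case: (ltnP k (size l)) => Hk; first by rewrite -E index_uniq.
  rewrite nth_default in E => //; lia.
- apply/eqP => E.
  case: (ltnP k (size l)) => Hk.
  + by move: ql; rewrite -E mem_nth.
  + rewrite nth_default in E => //; lia.
Qed.

Lemma count_mem_iota (L : seq nat) n q : uniq L -> (forall y, y \in L -> 0 < y <= n) ->
  count (fun y => (y \in L) && (y < q)) (iota 1 n) = count (fun y => y < q) L.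
Proof.
move=> uL HL.
have -> : count (fun y => (y \in L) && (y < q)) (iota 1 n)
        = count (fun y => y < q) [seq y <- iota 1 n | y \in L].
  by rewrite count_filter; apply: eq_count => y /=; rewrite andbC.
have /seq.permP PE : perm_eq [seq y <- iota 1 n | y \in L] L.
  apply: uniq_perm; first by rewrite filter_uniq // iota_uniq.
    by [].
  move=> y; rewrite mem_filter mem_iota; apply/andP/idP => [[]//|yL].
  split => //; have := HL y yL; lia.
exact: PE.
Qed.

Lemma count_le_in (T : eqType) (P Q : pred T) (s : seq T) :
  (forall x, x \in s -> Q x -> P x) -> count Q s <= count P s.
Proof.
elim: s => [|x s IH] H //=.
have H' : forall y, y \in s -> Q y -> P y by move=> y ys; apply: H; rewrite inE ys orbT.
have Hx := H x (mem_head _ _).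
have := IH H'; case: (P x) Hx; case: (Q x) => //= Hx; lia.
Qed.

Lemma count_eq_all (T : eqType) (P Q : pred T) (s : seq T) :
  (forall x, x \in s -> Q x -> P x) -> (count P s == count Q s) = all (fun x => P x ==> Q x) s.
Proof.
elim: s => [|x s IH] H //=.
have H' : forall y, y \in s -> Q y -> P y by move=> y ys; apply: H; rewrite inE ys orbT.
have Hx := H x (mem_head _ _).
have := count_le_in H'; rewrite -IH //.
case: (P x) Hx; case: (Q x) => //= Hx Hle; rewrite ?add1n ?add0n ?eqSS //.
- apply/eqP; lia.
- by have := Hx isT.
Qed.

Lemma count_split (T : Type) (a b : pred T) (s : seq T) :
  count (fun y => ~~ a y && b y) s + count (fun y => a y && b y) s = count b s.
Proof. elim: s => //= x s IH; case: (a x); case: (b x) => /=; lia. Qed.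

Lemma count_notin_iota (L : seq nat) n q : uniq L -> (forall y, y \in L -> 0 < y <= n) ->
  count (fun y => (y \notin L) && (y < q)) (iota 1 n) + count (fun y => y < q) L
  = count (fun y => y < q) (iota 1 n).
Proof.
move=> uL HL; rewrite -(count_mem_iota q uL HL).
exact: (count_split (fun y => y \in L) (fun y => y < q)).
Qed.

Lemma eq_add_cancel a b a' b' z : a + b = z -> a' + b' = z -> (a == a') = (b' == b).
Proof. move=> h1 h2; apply/eqP/eqP; lia. Qed.

Lemma bjsL_fix n q (V : seq nat) (fD fA : nat -> nat) :
  0 < q <= n -> uniq (map fD V) -> uniq (map fA V) ->
  (forall x, x \in V -> 0 < fD x < fA x /\ fA x <= n) ->
  (bjsL n (map fD V) (map fA V) q == q) = ~~ has (fun x => (fD x <= q) && (q <= fA x)) V.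
Proof.
move=> Hq uD uA HV; rewrite /bjsL.
case: ifP => qD.
- have kV : index q (map fD V) < size V by rewrite -(size_map fD) index_mem.
  have := nth_index 0 qD; rewrite (nth_map 0 0 fD) // => Ey.
  rewrite (nth_map 0 0 fA) //.
  move: Ey; set y := nth 0 V _ => Ey.
  have yV : y \in V by exact: mem_nth.
  clearbody y.
  have [H1 H2] := HV _ yV.
  have -> : (fA y == q) = false by apply/negbTE/eqP; lia.
  symmetry; apply/negbTE; rewrite negbK; apply/hasP; exists y => //; lia.
- rewrite nth_eq_index; last (by rewrite filter_uniq // iota_uniq); last by lia.
  rewrite mem_filter mem_iota.
  case qA: (q \in map fA V) => /=.
  + symmetry; apply/negbTE; rewrite negbK; case/mapP: qA => x xV qx; apply/hasP; exists x => //.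
    have := HV _ xV; lia.
  + have -> : 1 <= q < 1 + n by lia.
    rewrite /= (@index_filter_iota (fun v => v \notin map fA V) 1 n q); [|lia|by rewrite qA].
    rewrite (@index_filter_iota (fun v => v \notin map fD V) 1 n q); [|lia|by rewrite qD].
    have mA : forall y, y \in map fA V -> 0 < y <= n.
      by move=> y /mapP [x xV ->]; have := HV _ xV; lia.
    have mD : forall y, y \in map fD V -> 0 < y <= n.
      by move=> y /mapP [x xV ->]; have := HV _ xV; lia.
    have HA := count_notin_iota q uA mA.
    have HD := count_notin_iota q uD mD.
    rewrite (eq_add_cancel HA HD) !count_map.
    rewrite count_eq_all; last by move=> x xV /=; have := HV _ xV; lia.
    rewrite -all_predC; apply: eq_in_all => x xV /=.
    have h1 : fD x != q by apply/negP => /eqP E; rewrite -E map_f in qD.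
    have h2 : fA x != q by apply/negP => /eqP E; rewrite -E map_f in qA.
    have := HV _ xV; move: h1 h2.
    case: (ltngtP (fD x) q); case: (ltngtP (fA x) q) => //=; lia.
Qed.


Definition dd (c : seq nat) j := j + nth 0 c j.

Lemma kupP n c : kupisch_series n.+1 c ->
  [/\ nth 0 c n = 1, (forall j, j < n -> 2 <= nth 0 c j) &
      (forall j, j < n -> nth 0 c j <= (nth 0 c j.+1).+1)].
Proof.
case/and5P => _ _ /eqP h1 /allP h2 /allP h3; split => //.
- by move=> j jn; apply: h2; rewrite mem_iota.
- by move=> j jn; apply: h3; rewrite mem_iota.
Qed.

Lemma dmono n c j k : kupisch_series n.+1 c -> j <= k -> k <= n -> dd c j <= dd c k.
Proof.
move=> /kupP [_ _ h] jk kn; elim: k jk kn => [|k IH] jk kn.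
- by have -> : j = 0 by lia.
- case: (ltngtP j k.+1) => hj; last by subst.
  + have := IH (ltnSE hj) (ltnW kn); have := h k kn; rewrite /dd; lia.
  + lia.
Qed.

Lemma dn n c : kupisch_series n.+1 c -> dd c n = n.+1.
Proof. by case/kupP => h _ _; rewrite /dd h addn1. Qed.

Lemma dlt n c j : kupisch_series n.+1 c -> j < n -> j.+2 <= dd c j.
Proof. move=> /kupP [_ h _] jn; have := h j jn; rewrite /dd; lia. Qed.

Lemma dle n c j : kupisch_series n.+1 c -> j <= n -> dd c j <= n.+1.
Proof. by move=> Hk jn; rewrite -(dn Hk); apply: (dmono Hk jn (leqnn n)). Qed.

Lemma dlast n c : kupisch_series n.+1 c -> 0 < n -> dd c n.-1 = n.+1.
Proof.
move=> Hk n0; have := dlt Hk (_ : n.-1 < n); have := dle Hk (leq_pred n); move=> h1 h2; have := h2 ltac:(lia); lia.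
Qed.

Lemma height_col n c i t : kupisch_series n.+1 c -> i <= n ->
  (0 < i -> i.-1 + dd c i.-1 <= t) -> t < i + dd c i -> t <= 2 * n ->
  dyck_height n c (2 * n - t) = t - 2 * i.
Proof.
move=> Hk i_n lo hi t2n.
rewrite /dyck_height subKn //.
have Hi : i < n.+1 by lia.
apply/eqP; rewrite eqn_leq; apply/andP; split.
- apply/bigmax_leqP => i' /andP [h1 h2].
  case: (leqP i i') => hii; first lia.
  have hm : dd c i' <= dd c i.-1 by apply: dmono Hk _ _; lia.
  have hl := lo ltac:(lia). move: hm hl h1 h2; rewrite /dd; lia.
- have := @leq_bigmax_cond _ (fun i' : 'I_n.+1 => (2 * i' <= t) && (t.+1 - 2 * i' <= nth 0 c i'))
     (fun i' : 'I_n.+1 => t - 2 * i') (Ordinal Hi).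
  apply => /=; apply/andP; split.
  + case: (posnP i) => [->|ip]; first lia.
    have := lo ip; have : i.-1.+2 <= dd c i.-1 by apply: dlt Hk _; lia.
    rewrite /dd; lia.
  + move: hi; rewrite /dd; case: (posnP i) => [->|ip]; first lia.
    have := lo ip; have : i.-1.+2 <= dd c i.-1 by apply: dlt Hk _; lia.
    rewrite /dd; lia.
Qed.

Lemma col_ex n c t : kupisch_series n.+1 c -> t <= 2 * n ->
  exists i, [/\ i <= n, (0 < i -> i.-1 + dd c i.-1 <= t) & t < i + dd c i].
Proof.
move=> Hk t2n.
have ex : exists i, t < i + dd c i by exists n; rewrite (dn Hk); lia.
case: (ex_minnP ex) => i Hi Hmin; exists i; split => //.
- by apply: Hmin; rewrite (dn Hk); lia.
- move=> ip; case: (leqP (i.-1 + dd c i.-1) t) => // h.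
  have := Hmin _ h; lia.
Qed.

Lemma step_lem n c x : kupisch_series n.+1 c -> x < 2 * n ->
  ((exists j, j < n /\ 2 * n - x = j + dd c j) /\
     dyck_height n c x.+1 = (dyck_height n c x).+1) \/
  ((forall j, j < n -> 2 * n - x != j + dd c j) /\
     dyck_height n c x = (dyck_height n c x.+1).+1).
Proof.
move=> Hk x2n.
set t := 2 * n - x.
have ex1 : x = 2 * n - t by rewrite /t; lia.
have t1 : 0 < t by rewrite /t; lia.
have t2 : t <= 2 * n by rewrite /t; lia.
clearbody t; subst x.
have -> : (2 * n - t).+1 = 2 * n - t.-1 by lia.
case: (col_ex Hk t2) => i [i_n lo hi].
have Hx : dyck_height n c (2 * n - t) = t - 2 * i by apply: height_col.
rewrite Hx.
case: (boolP ((0 < i) && (t == i.-1 + dd c i.-1))) => [/andP [ip /eqP te]|hne].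
- left; split.
  + exists i.-1; split; first lia. by [].
  + have hl : i.-1.+2 <= dd c i.-1 by apply: dlt Hk _; lia.
    rewrite (@height_col n c i.-1 t.-1) //; try lia.
    move=> ip2; have : dd c i.-1.-1 <= dd c i.-1 by apply: dmono Hk _ _; lia.
    lia.
- right; split.
  + move=> j jn; apply/eqP => E.
    case: (leqP i j) => hij.
    * have : dd c i <= dd c j by apply: dmono Hk _ _; lia.
      lia.
    * have : dd c j <= dd c i.-1 by apply: dmono Hk _ _; lia.
      have := lo ltac:(lia).
      move: hne; rewrite negb_and => /orP [|/eqP]; first lia.
      lia.
  + have hlo : 0 < i -> i.-1 + dd c i.-1 <= t.-1.
      move=> ip; have := lo ip; move: hne; rewrite ip /= => /eqP; lia.
    rewrite (@height_col n c i t.-1) //; try lia.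
    case: (posnP i) => [i0|ip]; first lia.
    have := hlo ip; have : i.-1.+2 <= dd c i.-1 by apply: dlt Hk _; lia.
    lia.
Qed.

Lemma size_steps n c : size (dyck_steps n c) = 2 * n.
Proof. by rewrite /dyck_steps size_map size_iota. Qed.

Lemma nth_steps n c x : x < 2 * n ->
  nth false (dyck_steps n c) x = (dyck_height n c x < dyck_height n c x.+1).
Proof. by move=> hx; rewrite /dyck_steps (nth_map 0) ?size_iota // nth_iota. Qed.

Lemma up_iff n c x : kupisch_series n.+1 c -> x < 2 * n ->
  nth false (dyck_steps n c) x = true <-> exists j, j < n /\ 2 * n - x = j + dd c j.
Proof.
move=> Hk hx; rewrite nth_steps //.
case: (step_lem Hk hx) => [[ex ->]|[nex ->]].
- by rewrite ltnSn; split.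
- rewrite ltnNge leqnSn /=; split => // [[j [jn /eqP E]]].
  by have := nex j jn; rewrite E.
Qed.

Lemma height0 n c : kupisch_series n.+1 c -> dyck_height n c 0 = 0.
Proof.
move=> Hk.
have := @height_col n c n (2 * n) Hk (leqnn n).
rewrite subnn => -> //; try lia.
- move=> n0; rewrite (dlast Hk n0); lia.
- rewrite (dn Hk); lia.
Qed.

Lemma count_up n c k : kupisch_series n.+1 c -> k <= 2 * n ->
  2 * count id (take k (dyck_steps n c)) = k + dyck_height n c k.
Proof.
move=> Hk; elim: k => [|k IH] hk.
- by rewrite take0 height0.
- rewrite (take_nth false) ?size_steps //.
  rewrite -cats1 count_cat /= nth_steps //.
  have := IH (ltnW hk).
  case: (step_lem Hk hk) => [[_ E]|[_ E]]; rewrite E; [rewrite ltnSn | rewrite ltnNge leqnSn] => /=; lia.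
Qed.

Lemma count_negb_id (l : seq bool) : count negb l + count id l = size l.
Proof. elim: l => //= b l IH; case: b => /=; lia. Qed.

Lemma valley_iff n c x : kupisch_series n.+1 c -> 0 < n ->
  x \in valleys (dyck_steps n c) <->
  exists j, [/\ j < n.-1, dd c j < dd c j.+1 & x = 2 * n - 1 - (j + dd c j)].
Proof.
move=> Hk n0.
rewrite /valleys mem_filter mem_iota size_steps add0n.
have hl := dlast Hk n0.
split.
- case/andP => /andP [hd hu] hx.
  have hx2 : x.+1 < 2 * n by lia.
  case/(up_iff Hk hx2): hu => j [jn E].
  have jn1 : j < n.-1.
    case: (ltnP j n.-1) => // hj; have ej : j = n.-1 by lia.
    rewrite ej hl in E; lia.
  have hm : dd c j <= dd c j.+1 by apply: dmono Hk _ _; lia.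
  exists j; split => //; last lia.
  case: (ltnP (dd c j) (dd c j.+1)) => // hj.
  move: hd; have -> : nth false (dyck_steps n c) x = true; last by [].
  apply/(up_iff Hk _); first lia.
  exists j.+1; split; first lia. lia.
- case=> j [jn jump ->].
  have hdj := dlt Hk (_ : j < n).
  have := hdj ltac:(lia) => hdj2.
  have hmn : dd c j.+1 <= n.+1 by apply: dle Hk _; lia.
  apply/andP; split; last lia.
  apply/andP; split.
  + apply/negP => /(up_iff Hk _) [|j' [j'n E]]; first lia.
    case: (leqP j' j) => hj'.
    * have : dd c j' <= dd c j by apply: dmono Hk _ _; lia.
      lia.
    * have : dd c j.+1 <= dd c j' by apply: dmono Hk _ _; lia.
      lia.
  + apply/(up_iff Hk _); first lia.
    exists j; split; first lia. lia.
Qed.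

Lemma valley_vals n c j : kupisch_series n.+1 c -> 0 < n -> j < n.-1 ->
  let x := 2 * n - 1 - (j + dd c j) in
  count id (take x.+1 (dyck_steps n c)) = n - j.+1 /\
  count negb (take x.+1 (dyck_steps n c)) = n.+1 - dd c j.
Proof.
move=> Hk n0 jn x.
have hdj : j.+2 <= dd c j by apply: dlt Hk _; lia.
have hm : dd c j <= dd c j.+1 by apply: dmono Hk _ _; lia.
have hmn : dd c j.+1 <= n.+1 by apply: dle Hk _; lia.
have hx : x.+1 <= 2 * n by rewrite /x; lia.
have Hc := count_up Hk hx.
have Hh : dyck_height n c x.+1 = (j + dd c j) - 2 * j.+1.
  have -> : x.+1 = 2 * n - (j + dd c j) by rewrite /x; lia.
  apply: height_col => //; try lia.
have Hs := count_negb_id (take x.+1 (dyck_steps n c)).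
rewrite size_takel ?size_steps // in Hs.
rewrite Hh in Hc; rewrite /x in Hc Hs *; split; lia.
Qed.


Lemma dge n c i : kupisch_series n.+1 c -> i <= n -> i < dd c i.
Proof.
move=> Hk; case: (ltngtP i n) => // h _.
- have := dlt Hk h; lia.
- subst; rewrite (dn Hk); lia.
Qed.

Lemma find_iota (P : pred nat) k : has P (iota 0 k) ->
  [/\ find P (iota 0 k) < k, P (find P (iota 0 k)) &
      forall j, j < find P (iota 0 k) -> ~~ P j].
Proof.
move=> ha.
have hf : find P (iota 0 k) < k by move: (ha); rewrite has_find size_iota.
split => //.
- by have := nth_find 0 ha; rewrite nth_iota.
- move=> j hj; have := before_find 0 hj; rewrite nth_iota ?add0n => [->//|]; lia.
Qed.

Lemma inj_top_spec n c s : kupisch_series n.+1 c -> s <= n ->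
  [/\ inj_top c s <= s, s < dd c (inj_top c s) &
      forall j', j' < inj_top c s -> dd c j' <= s].
Proof.
move=> Hk sn.
have hs := dge Hk sn.
have ha : has (fun j => s - j < nth 0 c j) (iota 0 s.+1).
  apply/hasP; exists s; first by rewrite mem_iota; lia.
  by rewrite /= subnn; move: hs; rewrite /dd; lia.
case: (find_iota ha) => h1 h2 h3.
rewrite /inj_top /dd; split.
- lia.
- move: h2 => /=; lia.
- move=> j' hj'; have := h3 j' hj'; rewrite /= -leqNgt; lia.
Qed.

Definition Phi c i := (0 < i) && all (fun j => (dd c j < dd c j.+1) ==> (dd c j < i)) (iota 0 i).

Lemma injdim1 n c i : kupisch_series n.+1 c -> i <= n -> (injdim_proj c i == 1) = Phi c i.
Proof.
move=> Hk i_n.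
rewrite /injdim_proj /injdim /=.
have -> : (i + nth 0 c i).-1 = (dd c i).-1 by [].
have hdi := dge Hk i_n.
have hdn := dle Hk i_n.
have hs : (dd c i).-1 <= n by lia.
have [a1 a2 a3] := inj_top_spec Hk hs.
set j0 := inj_top c (dd c i).-1 in a1 a2 a3 *.
case: ifP => /eqP hj0 /=.
- symmetry; apply/negbTE/negP => /andP [ip /allP H].
  have := H i.-1; rewrite mem_iota => /(_ ltac:(lia)).
  have := a3 i.-1 ltac:(lia).
  have : i.-1.+2 <= dd c i.-1 by apply: dlt Hk _; lia.
  have -> : i.-1.+1 = i by lia.
  move=> h1 h2 /implyP h3; have := h3 ltac:(lia); lia.
- have hj0i : j0 < i.
    case: (ltngtP j0 i) => // h; have := a3 i h; lia.
  clearbody j0.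
  have [i' ei] : exists i', i = i'.+1 by exists i.-1; lia.
  subst i.
  rewrite /= eqSS.
  have -> : (j0 + (i'.+1 - j0)).-1 = i' by lia.
  have hs' : i' <= n by lia.
  have [b1 b2 b3] := inj_top_spec Hk hs'.
  set m := inj_top c i' in b1 b2 b3 *.
  case: ifP => /= hm.
  + move/eqP: hm => hm; symmetry; apply/andP; split => //; apply/allP => j.
    rewrite mem_iota => hj; apply/implyP => jump.
    case: (ltnP (dd c j) i'.+1) => // hge.
    case: (ltnP j m) => hjm; first by have := b3 j hjm; lia.
    have h1 : dd c j0 <= dd c j by apply: dmono Hk _ _; lia.
    have h2 : dd c j.+1 <= dd c i'.+1 by apply: dmono Hk _ _; lia.
    lia.
  + symmetry; apply/negbTE/negP => /andP [_ /allP H].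
    move/negbT: hm => /eqP hm.
    case: (ltngtP m j0) => hmj //.
    * have := H j0.-1; rewrite mem_iota => /(_ ltac:(lia)) /implyP.
      have := a3 j0.-1 ltac:(lia).
      have -> : j0.-1.+1 = j0 by lia.
      move=> h1 h2; have := h2 ltac:(lia).
      have : dd c m <= dd c j0.-1 by apply: dmono Hk _ _; lia.
      lia.
    * have := b3 j0 hmj.
      have : dd c i'.+1 <= dd c j0 by lia.
      lia.
Qed.


Lemma fix_Phi n c (i0 : nat) : kupisch_series n.+1 c -> 0 < n -> i0 < n ->
  (bjs n (dyck_steps n c) i0.+1 == i0.+1) = Phi c (n - i0).
Proof.
move=> Hk n0 i0n.
set s := dyck_steps n c.
set V := valleys s.
set fD := fun x => count negb (take x.+1 s).
set fA := fun x => (count id (take x.+1 s)).+1.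
have vals : forall x, x \in V -> exists j, [/\ j < n.-1, dd c j < dd c j.+1,
    fD x = n.+1 - dd c j & fA x = n - j].
  move=> x /(valley_iff _ Hk n0) [j [jn jump ex]].
  have [h1 h2] := valley_vals Hk n0 jn.
  exists j; split => //.
  - by rewrite /fD ex h2.
  - rewrite /fA ex h1; lia.
have uV : uniq V by rewrite /V /valleys filter_uniq // iota_uniq.
have hmn : forall j, j < n.-1 -> dd c j.+1 <= n.+1.
  by move=> j jn; apply: dle Hk _; lia.
have hlt : forall j, j < n.-1 -> j.+2 <= dd c j.
  by move=> j jn; apply: dlt Hk _; lia.
have xeq : forall x x' j, x \in V -> x' \in V -> j < n.-1 ->
    x = 2 * n - 1 - (j + dd c j) -> x' = 2 * n - 1 - (j + dd c j) -> x = x'.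
  by move=> x x' j _ _ _ -> ->.
have uA : uniq (map fA V).
  rewrite map_inj_in_uniq // => x x' xV x'V E.
  have [j [jn jump _ ea]] := vals x xV.
  have [j' [jn' jump' _ ea']] := vals x' x'V.
  move: (xV) (x'V) => /(valley_iff _ Hk n0) [k [kn _ ek]] /(valley_iff _ Hk n0) [k' [kn' _ ek']].
  have [_ h1] := valley_vals Hk n0 kn.
  have [_ h1'] := valley_vals Hk n0 kn'.
  have [g1 _] := valley_vals Hk n0 kn.
  have [g1' _] := valley_vals Hk n0 kn'.
  have : fA x = n - k by rewrite /fA ek g1; lia.
  have : fA x' = n - k' by rewrite /fA ek' g1'; lia.
  move=> e1 e2; have ekk : k = k' by lia.
  by rewrite ek ek' ekk.
have uD : uniq (map fD V).
  rewrite map_inj_in_uniq // => x x' xV x'V E.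
  move: (xV) (x'V) => /(valley_iff _ Hk n0) [k [kn jk ek]] /(valley_iff _ Hk n0) [k' [kn' jk' ek']].
  have [_ h1] := valley_vals Hk n0 kn.
  have [_ h1'] := valley_vals Hk n0 kn'.
  have e1 : fD x = n.+1 - dd c k by rewrite /fD ek h1.
  have e2 : fD x' = n.+1 - dd c k' by rewrite /fD ek' h1'.
  have := hmn k kn; have := hmn k' kn'.
  have ekk : k = k'.
    case: (ltngtP k k') => // hk.
    + have : dd c k.+1 <= dd c k' by apply: dmono Hk _ _; lia.
      have := hmn k kn; have := hmn k' kn'; lia.
    + have : dd c k'.+1 <= dd c k by apply: dmono Hk _ _; lia.
      have := hmn k kn; have := hmn k' kn'; lia.
  by rewrite ek ek' ekk.
have HV : forall x, x \in V -> 0 < fD x < fA x /\ fA x <= n.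
  move=> x xV; have [j [jn jump -> ->]] := vals x xV.
  have := hmn j jn; have := hlt j jn; lia.
have hq : 0 < i0.+1 <= n by lia.
rewrite bjsE (@bjsL_fix n i0.+1 V fD fA hq uD uA HV).
apply/idP/idP.
- move/hasPn => H; apply/andP; split; first lia.
  apply/allP => j; rewrite mem_iota => hj; apply/implyP => jump.
  have jn : j < n.-1.
    case: (ltnP j n.-1) => // hj'.
    have ej : j = n.-1 by lia.
    move: jump; rewrite ej (dlast Hk n0) (_ : n.-1.+1 = n); last lia.
    by rewrite (dn Hk) ltnn.
  have xV : 2 * n - 1 - (j + dd c j) \in V by apply/(valley_iff _ Hk n0); exists j.
  have := H _ xV.
  have [h1 h2] := valley_vals Hk n0 jn.
  rewrite /fD /fA h1 h2 /=.
  have := hmn j jn; have := hlt j jn; lia.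
- case/andP => _ /allP H; apply/hasPn => x xV.
  have [j [jn jump -> ->]] := vals x xV.
  case: (ltnP j (n - i0)) => hj.
  + have := H j; rewrite mem_iota => /(_ ltac:(lia)) /implyP /(_ jump).
    have := hmn j jn; lia.
  + lia.
Qed.

Unset Implicit Arguments.

Theorem mainTheorem1 (n : nat) (pi : 'S_n) (c : seq nat) :
  1 <= n -> avoids321 pi -> is_A_pi pi c ->
  #|[set i : 'I_n.+1 | injdim_proj c i == 1]| = #|[set i : 'I_n | pi i == i]|.
Proof.
move=> n1 _ [Hk Hpi].
have E1 : [set i : 'I_n.+1 | injdim_proj c i == 1] = [set i : 'I_n.+1 | Phi c i].
  by apply/setP => i; rewrite !inE (injdim1 Hk) // -ltnS.
have E2 : [set i : 'I_n | pi i == i] = [set i : 'I_n | Phi c (n - i)].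
  apply/setP => i; rewrite !inE -(fix_Phi Hk n1 (ltn_ord i)) Hpi eqSS.
  by [].
pose f := fun i : 'I_n => (inord (n - i) : 'I_n.+1).
have finj : injective f.
  move=> i i' /(congr1 val); rewrite /f /= !inordK; try lia.
  move=> h; apply: val_inj => /=; have := ltn_ord i; have := ltn_ord i'; lia.
have E3 : [set i : 'I_n.+1 | Phi c i] = f @: [set i : 'I_n | Phi c (n - i)].
  apply/setP => k; rewrite inE; apply/idP/imsetP.
  - move=> hk; have k0 : 0 < k by case/andP: hk.
    have hkn : n - k < n by have := ltn_ord k; lia.
    exists (Ordinal hkn).
    + rewrite inE /=; have -> : n - (n - k) = k by have := ltn_ord k; lia.
      by [].
    + apply: val_inj; rewrite /f /= inordK; have := ltn_ord k; lia.
  - case=> i; rewrite inE => hi ->; rewrite /f inordK //; lia.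
by rewrite E1 E2 E3 card_imset.
Qed.
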